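(* Let $G$ be an $(r,t,a_0)$-staircase graph, let $n=|E(G)|$. (1) Let $\mathcal{C}_2(G)$ be the binary code of $G$, of dimension $k$. Then $\mathcal{C}_2(G)$ is an $(n,k,r,t)_{\mathrm{seq}}$ code if and only if $G$ has girth at least $t+1$. (2) If $G$ has girth at least $t+1$, then every code over $\mathbb{F}_q$ associated to $G$ (of dimension $k$, say) is an $(n,k,r,t)_{\mathrm{seq}}$ code.
   Context: Staircase graph: Let $r\ge 2$ and $t\ge 2$ be integers, $s=\lfloor (t-1)/2\rfloor$, and $a_0$ a positive integer; if $t$ is odd assume $t\ge 3$. An $(r,t,a_0)$-staircase graph is a finite simple graph $G$ whose vertex set is a disjoint union $\{v_\infty\}\cup V_0\cup V_1\cup\cdots\cup V_s$ such that: $|V_0|=a_0$ and $v_\infty$ is adjacent to every vertex of $V_0$ and to no other vertex; for each $i$ with $0\le i\le s-1$ (if $t$ is even) or $0\le i\le s-2$ (if $t$ is odd), every vertex of $V_i$ has exactly $r$ neighbours in $V_{i+1}$ and every vertex of $V_{i+1}$ has exactly one neighbour in $V_i$; if $t$ is even, every vertex of $V_s$ has exactly $r$ neighbours in $V_s$; if $t$ is odd, every vertex of $V_{s-1}$ has exactly $r$ neighbours in $V_s$ and every vertex of $V_s$ has exactly $r+1$ neighbours in $V_{s-1}$; and there are no other edges. Codes of a staircase graph: a code over $\mathbb{F}_q$ associated to $G$ is a linear code of length $|E(G)|$ (coordinates indexed by the edges) having a parity-check matrix $H$ with rows indexed by $V(G)\setminus\{v_\infty\}$ and columns indexed by $E(G)$,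 where $H_{v,e}\neq 0$ if and only if $e$ is incident with $v$. The binary code $\mathcal{C}_2(G)$ of $G$ is the associated code over $\mathbb{F}_2$ (i.e. $H$ is the $0/1$ vertex–edge incidence matrix with the row of $v_\infty$ deleted). Girth: length of a shortest cycle ($\infty$ if there is none). Sequential-recovery LRC: an $(n,k,r,t)_{\mathrm{seq}}$ code is an $[n,k]$ linear code $\mathcal{C}\subseteq\mathbb{F}_q^n$ such that for every $E\subseteq[n]$ with $1\le|E|=u\le t$ there is an ordering $\ell_1,\dots,\ell_u$ of $E$ and sets $R_j\subseteq[n]$, $|R_j|\le r$, $R_j\cap\{\ell_j,\dots,\ell_u\}=\emptyset$, with coefficients $a_{j,i}\in\mathbb{F}_q$ such that $c_{\ell_j}=\sum_{i\in R_j}a_{j,i}c_i$ for all $c\in\mathcal{C}$, $j\in[u]$. *)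

(* Defs.v *)
From HB Require Import structures.
From mathcomp Require Import all_boot all_order all_algebra.
Set Implicit Arguments. Unset Strict Implicit. Unset Printing Implicit Defensive.
Import GRing.Theory.
Local Open Scope ring_scope.

(* A finite simple graph is a symmetric irreflexive relation [adj] on a
   finType [V].  Its edges are the 2-element vertex sets {u,v} with adj u v. *)
Definition is_edge (V : finType) (adj : rel V) (e : {set V}) : bool :=
  [exists u, exists v, adj u v && (e == [set u; v])].

Notation edge adj := {e : {set _} | is_edge adj e}.

Definition girth_at_least (V : finType) (adj : rel V) (g : nat) : Prop :=
  forall s : seq V, uniq s -> (3 <= size s)%N -> cycle adj s -> (g <= size s)%N.

(* Staircase graph, with the level function [lvl]: for v <> v_inf,
   v lies in V_(lvl v). *)
Definition staircase_levels (V : finType) (adj : rel V) (vinf : V)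
    (r t a0 : nat) (lvl : V -> nat) : Prop :=
  let s := (t.-1)./2 in
  let L := fun i : nat => [set v | (v != vinf) && (lvl v == i)] in
  [/\ (forall v, v != vinf -> (lvl v <= s)%N) /\ #|L 0%N| = a0,
      (forall v, adj vinf v = (v \in L 0%N)),
      (forall i, (if odd t then (i.+2 <= s)%N else (i < s)%N) ->
        (forall v, v \in L i -> #|[set u in L i.+1 | adj v u]| = r) /\
        (forall u, u \in L i.+1 -> #|[set v in L i | adj u v]| = 1%N)),
      (if odd t then
         (forall v, v \in L s.-1 -> #|[set u in L s | adj v u]| = r) /\
         (forall u, u \in L s -> #|[set v in L s.-1 | adj u v]| = r.+1)
       else
         forall v, v \in L s -> #|[set u in L s | adj v u]| = r) &
      (forall u v, u != vinf -> v != vinf -> adj u v ->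
        [\/ lvl v = (lvl u).+1, lvl u = (lvl v).+1 |
            [/\ ~~ odd t, lvl u = s & lvl v = s]])].

Definition staircase (V : finType) (adj : rel V) (vinf : V) (r t a0 : nat) : Prop :=
  exists lvl : V -> nat, staircase_levels adj vinf r t a0 lvl.

Definition has_parity_check (V : finType) (adj : rel V) (vinf : V)
    (F : fieldType) (H : V -> edge adj -> F)
    (C : {vspace {ffun edge adj -> F^o}}) : Prop :=
  forall c : {ffun edge adj -> F^o},
    (c \in C) = [forall v, (v != vinf) ==> (\sum_(e : edge adj) H v e * c e == 0)].

Definition associated_code (V : finType) (adj : rel V) (vinf : V)
    (F : fieldType) (C : {vspace {ffun edge adj -> F^o}}) : Prop :=
  exists H : V -> edge adj -> F,
    (forall v e, v != vinf -> (H v e != 0) = (v \in val e)) /\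
    has_parity_check vinf H C.

Definition binary_code (V : finType) (adj : rel V) (vinf : V)
    (C : {vspace {ffun edge adj -> ('F_2)^o}}) : Prop :=
  has_parity_check vinf (fun v (e : edge adj) => ((v \in val e) : nat)%:R : 'F_2) C.

Definition seq_recoverable (F : fieldType) (I : finType)
    (C : {vspace {ffun I -> F^o}}) (r t : nat) : Prop :=
  forall E : {set I}, (1 <= #|E| <= t)%N ->
    exists l : seq I,
      [/\ uniq l, [set x in l] = E &
      (* l = (l_1,...,l_u); for l_j = x, the tail {l_j,...,l_u} is drop (index x l) l *)
      forall x, x \in l ->
        exists R : {set I}, exists a : I -> F,
          [/\ (#|R| <= r)%N, [disjoint R & drop (index x l) l] &
              forall c, c \in C -> c x = \sum_(i in R) a i * c i]].

Definition seq_code (F : fieldType) (I : finType)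
    (C : {vspace {ffun I -> F^o}}) (n k r t : nat) : Prop :=
  [/\ #|I| = n, \dim C = k & seq_recoverable C r t].

(* Main.v *)
Require Import Defs.
From HB Require Import structures.
From mathcomp Require Import all_boot all_order all_algebra.
From mathcomp Require Import zify.
Set Implicit Arguments. Unset Strict Implicit. Unset Printing Implicit Defensive.

Lemma disjFr (T : finType) (R : {set T}) (l : seq T) i :
  [disjoint R & l] -> i \in R -> (i \in l) = false.
Proof. move=> dR iR. exact: (disjointFr dR iR). Qed.

Section Graph.
Variables (V : finType) (adj : rel V).
Hypotheses (adjS : symmetric adj) (adjI : irreflexive adj).

Lemma nbr_card r t a0 vinf lvl : (2 <= t)%N -> staircase_levels adj vinf r t a0 lvl ->
  forall v, v != vinf -> (#|[set u | adj v u]| <= r.+1)%N.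
Proof.
move=> t2; rewrite /staircase_levels.
set s := (t.-1)./2.
case=> [[Hlv HL0] Hvinf Hstep Htop Hno] v hv.
move eqi: (lvl v) => i.
pose Lv j := [set v0 | v0 != vinf & lvl v0 == j].
have vLi : v \in Lv i by rewrite inE hv eqi eqxx.
have his : i <= s by rewrite -eqi; exact: Hlv.
have oddS : odd t -> 0 < s.
  move=> ot; rewrite /s; move: t2 ot; case: (t) => [|[|[|t']]] //= _ _.
set D := if i == 0 then [set vinf] else [set u in Lv i.-1 | adj v u].
set U := [set u in Lv i.+1 | adj v u].
set S := if ~~ odd t && (i == s) then [set u in Lv s | adj v u] else set0.
have sub : [set u | adj v u] \subset D :|: U :|: S.
  apply/subsetP => u; rewrite inE => hvu.
  have [eu|hu] := eqVneq u vinf.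
    subst u; have := Hvinf v; rewrite adjS hvu => /esym.
    rewrite inE => /andP [_ /eqP h0].
    rewrite /D; have -> : i == 0 by rewrite -eqi h0.
    by rewrite !inE eqxx.
  rewrite /D /U /S.
  case: (Hno v u hv hu hvu) => [h|h|[h1 h2 h3]].
  - by rewrite eqi in h; rewrite !inE hu h eqxx hvu /= orbT.
  - rewrite eqi in h; rewrite h /=.
    by rewrite !inE hu /= eqxx hvu.
  - rewrite eqi in h2; by rewrite h2 (negbTE h1) !eqxx /= !inE hu h3 eqxx hvu /= !orbT.
have cD : #|D| <= if odd t && (i == s) then r.+1 else 1.
  rewrite /D; case: eqP => [_|/eqP i0].
    by rewrite cards1; case: ifP.
  have iS : i = (i.-1).+1 by rewrite prednK // lt0n.
  case ot: (odd t) => /=.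
    case: eqP => [is_|/eqP ins].
      rewrite ot in Htop; case: Htop => _ H2.
      by rewrite -is_ in H2; rewrite /Lv (H2 v vLi).
    case: (Hstep i.-1) => [|_ H2]; first by rewrite ot -iS ltn_neqAle ins his.
    by rewrite -iS in H2; rewrite /Lv (H2 v vLi).
  case: (Hstep i.-1) => [|_ H2]; first by rewrite ot -iS.
  by rewrite -iS in H2; rewrite /Lv (H2 v vLi).
have cU : #|U| <= if i == s then 0 else r.
  case: eqP => [is_|/eqP ins].
    rewrite leqn0 cards_eq0; apply/eqP/setP => u; rewrite !inE.
    apply/negbTE; apply/negP => /andP [/andP [hu /eqP hl] _].
    by have := Hlv u hu; rewrite hl -is_ ltnn.
  have ilt : i < s by rewrite ltn_neqAle ins his.
  case ot: (odd t).
    case: (ltnP i.+1 s) => h.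
      case: (Hstep i) => [|H1 _]; first by rewrite ot.
      by rewrite /Lv (H1 v vLi).
    have is1 : s = i.+1 by apply/eqP; rewrite eqn_leq h ilt.
    rewrite ot in Htop; case: Htop => H1 _.
    by rewrite is1 /= in H1; rewrite /U /Lv (H1 v vLi).
  case: (Hstep i) => [|H1 _]; first by rewrite ot.
      by rewrite /Lv (H1 v vLi).
have cS : #|S| <= if ~~ odd t && (i == s) then r else 0.
  rewrite /S; case: ifP => [/andP [ot /eqP is_]|_]; last by rewrite cards0.
  rewrite (negbTE ot) in Htop.
  by rewrite -is_ in Htop; rewrite /Lv -is_ (Htop v vLi).
apply: (leq_trans (subset_leq_card sub)).
apply: (leq_trans (leq_card_setU _ _)).
apply: (leq_trans (leq_add (leq_card_setU _ _) (leqnn _))).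
move: cD cU cS; case: (odd t) oddS; case: eqP => //= [is_|_] os; try lia.
Qed.

Lemma set2_eq (a b c d : V) : [set a; b] = [set c; d] ->
  (a = c /\ b = d) \/ (a = d /\ b = c).
Proof.
move=> H.
have Ha : a \in [set c; d] by rewrite -H !inE eqxx.
have Hb : b \in [set c; d] by rewrite -H !inE eqxx orbT.
have Hc : c \in [set a; b] by rewrite H !inE eqxx.
have Hd : d \in [set a; b] by rewrite H !inE eqxx orbT.
move: Ha Hb Hc Hd; rewrite !inE.
case/orP=> /eqP Ha; case/orP=> /eqP Hb; subst; rewrite ?eqxx /= ?orbT //.
all: try by [left|right].
- by rewrite orbb => _ /eqP ->; left.
- by rewrite orbb => /eqP -> _; left.
Qed.

Lemma edge_ends (e : edge adj) : exists u v, adj u v /\ val e = [set u; v].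
Proof.
case: e => S /= /existsP [u /existsP [v /andP [huv /eqP ->]]].
by exists u, v.
Qed.

Lemma edge_other (e : edge adj) x : x \in val e ->
  exists y, adj x y /\ val e = [set x; y].
Proof.
have [u [v [huv ->]]] := edge_ends e.
rewrite !inE => /orP [] /eqP ->.
  by exists v.
by exists u; rewrite adjS setUC.
Qed.

Lemma set2_adj (e : edge adj) a b : val e = [set a; b] -> adj a b.
Proof.
have [u [v [huv ->]]] := edge_ends e.
move=> /set2_eq [[<- <-]|[<- <-]] //; by rewrite adjS.
Qed.


Lemma edeg_le v N : (#|[set u | adj v u]| <= N)%N ->
  (#|[set e : edge adj | v \in val e]| <= N)%N.
Proof.
move=> hN; apply: leq_trans hN.
pose g (e : edge adj) := odflt v [pick y | (val e == [set v; y]) && adj v y].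
have gP (e : edge adj) : v \in val e -> val e = [set v; g e] /\ adj v (g e).
  move=> hv; rewrite /g; case: pickP => [y /andP [/eqP -> ->] //|].
  have [y [hy ey]] := edge_other hv.
  by move/(_ y); rewrite ey eqxx hy.
rewrite -(@card_in_imset _ _ g); last first.
  move=> e1 e2; rewrite !inE => h1 h2 eg; apply: val_inj.
  by rewrite (gP _ h1).1 (gP _ h2).1 eg.
apply: subset_leq_card; apply/subsetP => y /imsetP [e]; rewrite inE => he ->.
by rewrite inE (gP _ he).2.
Qed.


Section Leaf.
Variables (vinf : V) (t : nat) (E : {set edge adj}).
Hypothesis girth : girth_at_least adj t.+1.
Hypothesis Et : (#|E| <= t)%N.

Definition eR a b := [exists e in E, val e == [set a; b]].

Lemma eR_adj a b : eR a b -> adj a b.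
Proof. by case/existsP => e /andP [_ /eqP /set2_adj]. Qed.

Lemma nth_inj (p : seq V) a b : uniq p -> (a < size p)%N -> (b < size p)%N ->
  nth vinf p a = nth vinf p b -> a = b.
Proof. by move=> u ha hb /eqP; rewrite nth_uniq // => /eqP. Qed.

Lemma no_cycle (p : seq V) (e' : edge adj) y :
  uniq p -> (forall i, (i.+1 < size p)%N -> eR (nth vinf p i) (nth vinf p i.+1)) ->
  (1 < size p)%N -> e' \in E ->
  val e' != [set nth vinf p (size p).-2; nth vinf p (size p).-1] ->
  val e' = [set nth vinf p (size p).-1; y] -> adj (nth vinf p (size p).-1) y ->
  y \in p -> False.
Proof.
move=> up pp p2 he' ne ey axy yp.
move eqm: (size p).-1 => m.
have sp : size p = m.+1 by rewrite -eqm prednK // ltnW.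
rewrite eqm in ne ey axy.
set x := nth vinf p m in ne ey axy.
set j := index y p.
have jlt : (j < size p)%N by rewrite index_mem.
have ny : nth vinf p j = y by rewrite nth_index.
have jm : j != m.
  by apply/eqP => jm; move: axy; rewrite /x -jm ny adjI.
have m1 : (0 < m)%N by move: p2; rewrite sp.
have jm1 : j != m.-1.
  apply/eqP => jm1; move/eqP: ne; apply; rewrite ey -ny jm1 setUC.
  done.
have j2 : (j.+2 <= m)%N by move: jlt jm jm1; rewrite sp; lia.
pose s := drop j p.
have ss : size s = (m.+1 - j)%N by rewrite size_drop sp.
have ns k : nth vinf s k = nth vinf p (j + k) by rewrite nth_drop.
have hs : (t.+1 <= size s)%N.
  apply: girth; first by rewrite drop_uniq.
    by rewrite ss; lia.
  rewrite (cycle_path vinf); apply/(pathP vinf) => k hk.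
  case: k hk => [|k] hk /=.
    rewrite -nth_last !ns ss addn0 ny.
    by have -> : (j + (m.+1 - j).-1)%N = m by lia.
  apply: eR_adj; rewrite !ns addnS; apply: pp.
  by rewrite sp; move: hk; rewrite ss; lia.
have : (size s <= #|E|)%N.
  pose h k := if k == m then val e' else [set nth vinf p k; nth vinf p k.+1].
  have -> : size s = size (map h (iota j (size s))) by rewrite size_map size_iota.
  rewrite cardE -(size_map val (enum E)).
  apply: uniq_leq_size.
    rewrite map_inj_in_uniq ?iota_uniq //.
    move=> k1 k2; rewrite !mem_iota ss => /andP [_ hk1] /andP [_ hk2].
    have {}hk1 : (k1 <= m)%N by lia.
    have {}hk2 : (k2 <= m)%N by lia.
    have xin : x \in val e' by rewrite ey !inE eqxx.
    have side k : (k < m)%N -> val e' = [set nth vinf p k; nth vinf p k.+1] -> False.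
      move=> km hk; move: xin; rewrite hk !inE => /orP [] /eqP.
        rewrite /x => /(nth_inj up); rewrite sp => H.
        by have := H (ltnSn m) (ltn_trans km (ltnSn m)); lia.
      rewrite /x => /(nth_inj up); rewrite sp => H.
      have e := H (ltnSn m) km.
      by move/eqP: ne; apply; rewrite hk /x e.
    rewrite /h; case: eqP => [->|/eqP n1]; case: eqP => [->|/eqP n2] //.
    - by move=> hh; exfalso; apply: (side k2 _ hh); lia.
    - by move=> hh; exfalso; apply: (side k1 _ (esym hh)); lia.
    move/set2_eq => [[e1 e2]|[e1 e2]].
      by apply: (nth_inj up) e1; rewrite sp; lia.
    have := nth_inj up _ _ e1; have := nth_inj up _ _ e2; rewrite sp.
    move=> f1 f2; have := f1 ltac:(lia) ltac:(lia); have := f2 ltac:(lia) ltac:(lia).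
    lia.
  move=> X /mapP [k]; rewrite mem_iota ss => /andP [hk1 hk2] ->.
  rewrite /h; case: eqP => [_|/eqP km].
    by apply: map_f; rewrite mem_enum.
  have /existsP [e /andP [he /eqP ev]] : eR (nth vinf p k) (nth vinf p k.+1).
    by apply: pp; rewrite sp; lia.
  by rewrite -ev; apply: map_f; rewrite mem_enum.
move: hs Et; lia.
Qed.


Definition Pth (p : seq V) := [/\ uniq p,
  (forall i, (i.+1 < size p)%N -> eR (nth vinf p i) (nth vinf p i.+1)),
  (1 < size p)%N, nth vinf p (size p).-1 != vinf &
  ((exists2 e, e \in E & vinf \in val e) -> vinf \in p)].

Definition Leaf := exists2 e, e \in E & exists v,
  [/\ v != vinf, v \in val e & forall e2, e2 \in E -> v \in val e2 -> e2 = e].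

Lemma step p : Pth p -> Leaf \/ exists y, Pth (rcons p y).
Proof.
case=> up pp p2 lv vp.
have he0 : eR (nth vinf p (size p).-2) (nth vinf p (size p).-1).
  have e : (size p).-2.+1 = (size p).-1 by lia.
  by have := pp (size p).-2; rewrite e; apply; lia.
have /existsP [e0 /andP [he0E /eqP ev0]] := he0.
set x := nth vinf p (size p).-1 in lv he0 ev0 *.
set xp := nth vinf p (size p).-2 in he0 ev0 *.
case: (pickP [pred e' in E | (x \in val e') && (val e' != [set xp; x])]).
  move=> e' /andP [he' /andP [xe ne]].
  have [y [axy ey]] := edge_other xe.
  case yp: (y \in p).
    by exfalso; apply: (no_cycle up pp p2 he' ne ey axy yp).
  right; exists y; split.
  - by rewrite rcons_uniq yp.
  - move=> i; rewrite size_rcons ltnS leq_eqVlt => /orP [/eqP ei|hi].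
      rewrite !nth_rcons ei ltnn eqxx.
      rewrite leqnn.
      have -> : i = (size p).-1 by lia.
      by apply/existsP; exists e'; rewrite he' ey eqxx.
    by rewrite !nth_rcons hi (ltn_trans (ltnSn i) hi); apply: pp.
  - by rewrite size_rcons; lia.
  - rewrite size_rcons /= nth_rcons ltnn eqxx; apply/eqP => yv.
    have hv : vinf \in p by apply: vp; exists e' => //; rewrite ey !inE -yv eqxx orbT.
    by move: yp; rewrite yv hv.
  - by move=> h; rewrite mem_rcons inE (vp h) orbT.
move=> none; left; exists e0 => //; exists x; split => //.
  by rewrite ev0 !inE eqxx orbT.
move=> e2 he2 xe2; apply: val_inj; rewrite ev0.
by have := none e2; rewrite /= he2 xe2 /= => /negbFE /eqP.
Qed.

Lemma path_ind n p : Pth p -> (#|V| - size p <= n)%N -> Leaf.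
Proof.
elim: n p => [|n IH] p hp hn; case: (step hp) => // [[y hy]];
  have := card_uniqP (let: And5 u _ _ _ _ := hy in u); rewrite size_rcons => hc;
  have := max_card (mem (rcons p y)); rewrite hc => hc'.
  by move: hn hc'; lia.
by apply: (IH _ hy); rewrite size_rcons; lia.
Qed.

Lemma leaf_exists : E != set0 -> Leaf.
Proof.
case/set0Pn => e he.
case: (pickP [pred e in E | vinf \in val e]).
  move=> e0 /andP [he0 ve0].
  have [y [ay ey]] := edge_other ve0.
  apply: (@path_ind #|V| [:: vinf; y]); last by rewrite leq_subr.
  split => //=.
  - by rewrite inE andbT; apply/eqP => vy; move: ay; rewrite vy adjI.
  - case=> [|i] //= _; by apply/existsP; exists e0; rewrite he0 ey eqxx.
  - by apply/eqP => vy; move: ay; rewrite vy adjI.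
  - by rewrite inE eqxx.
move=> none.
have [u [w [uw ev]]] := edge_ends e.
have wv : w != vinf.
  by apply/eqP => wv; have := none e; rewrite /= he ev wv !inE eqxx orbT.
apply: (@path_ind #|V| [:: u; w]); last by rewrite leq_subr.
split => //=.
- by rewrite inE andbT; apply/eqP => vy; move: uw; rewrite vy adjI.
- case=> [|i] //= _; by apply/existsP; exists e; rewrite he ev eqxx.
- by case=> e1 he1 ve1; have := none e1; rewrite /= he1 ve1.
Qed.

End Leaf.

Section Recover.
Import GRing.Theory.
Local Open Scope ring_scope.
Variables (vinf : V) (F : fieldType) (H : V -> edge adj -> F).
Variables (C : {vspace {ffun edge adj -> F^o}}) (r t : nat).
Hypothesis Hnz : forall v e, v != vinf -> (H v e != 0) = (v \in val e).
Hypothesis HC : has_parity_check vinf H C.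
Hypothesis deg : forall v, v != vinf -> (#|[set e : edge adj | v \in val e]| <= r.+1)%N.
Hypothesis girth : girth_at_least adj t.+1.

Lemma local_rec v (e0 : edge adj) : v != vinf -> v \in val e0 ->
  exists a : edge adj -> F, forall c, c \in C ->
    c e0 = \sum_(i in [set e : edge adj | v \in val e] :\ e0) a i * c i.
Proof.
move=> hv he0; exists (fun i => - H v i / H v e0) => c hc.
have := HC c; rewrite hc => /esym/forallP/(_ v)/implyP/(_ hv)/eqP hs.
have h0 : H v e0 != 0 by rewrite Hnz.
rewrite (bigD1 e0) //= in hs.
have e1 : \sum_(e | e != e0) H v e * c e =
          \sum_(i in [set e : edge adj | v \in val e] :\ e0) H v i * c i.
  rewrite big_mkcond [RHS]big_mkcond; apply: eq_bigr => e _; rewrite !inE.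
  case: eqP => //= _; case: (boolP (v \in val e)) => // hve.
  have /eqP -> : H v e == 0 by rewrite -(negbK (H v e == 0)) Hnz.
  by rewrite mul0r.
rewrite e1 in hs.
rewrite (eq_bigr (fun i => (H v i * c i) * (- (H v e0)^-1))); last first.
  by move=> i _; rewrite mulrN mulNr mulNr mulrAC.
rewrite -big_distrl /=.
move/eqP: hs; rewrite addrC addr_eq0 => /eqP ->.
by rewrite mulrNN mulrAC mulfV // mul1r.
Qed.

Definition Rec (l : seq (edge adj)) :=
  forall x, x \in l -> exists R : {set edge adj}, exists a : edge adj -> F,
    [/\ (#|R| <= r)%N, [disjoint R & drop (index x l) l] &
        forall c, c \in C -> c x = \sum_(i in R) a i * c i].

Lemma rec_all n (E : {set edge adj}) : #|E| = n -> (n <= t)%N ->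
  exists l, [/\ uniq l, [set x in l] = E & Rec l].
Proof.
elim: n E => [|n IH] E hE hn.
  exists [::]; split => //.
  by apply/setP => x; rewrite !inE; move/cards0_eq: hE => ->; rewrite inE.
have En : E != set0 by apply/set0Pn/card_gt0P; rewrite hE.
have [e he [v [hv ve uq]]] := leaf_exists vinf girth (eq_ind_r (fun k => (k <= t)%N) hn hE) En.
set E' := E :\ e.
have hE' : #|E'| = n by have := cardsD1 e E; rewrite he hE add1n => -[->].
have [l' [ul' sl' rl']] := IH E' hE' (ltnW hn).
have el' : e \notin l'.
  have -> : (e \in l') = (e \in [set x in l']) by rewrite inE.
  by rewrite sl' !inE eqxx.
exists (e :: l'); split.
- by rewrite /= el' ul'.
- apply/setP => x; rewrite inE in_cons.
  have -> : (x \in l') = (x \in E') by rewrite -sl' inE.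
  rewrite !inE.
  by case: eqP => [->|] //=.
move=> x; rewrite in_cons => /orP [/eqP ->|xl].
  rewrite /= eqxx drop0.
  have [a ha] := local_rec hv ve.
  exists ([set e0 : edge adj | v \in val e0] :\ e), a; split => //.
    have := cardsD1 e [set e0 : edge adj | v \in val e0]; rewrite inE ve.
    by rewrite add1n => h; have := deg hv; rewrite h ltnS.
  rewrite disjoint_subset; apply/subsetP => i; rewrite !inE => /andP [ie vi].
  rewrite negb_or ie /=; apply/negP => il.
  have : i \in E' by rewrite -sl' inE.
  rewrite !inE => /andP [_ iE].
  by move: ie; rewrite (uq i iE vi) eqxx.
have xe : x != e by apply: contraNneq el' => <-.
rewrite /= eq_sym (negbTE xe) /=.
exact: rl'.
Qed.

Lemma recoverable : seq_recoverable C r t.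
Proof.
move=> E /andP [_ hE].
by have [l [ul sl rl]] := rec_all (erefl #|E|) hE; exists l; split.
Qed.

End Recover.

Definition nx L i := if (i.+1 < L)%N then i.+1 else 0%N.

Lemma cyc_adj x0 (s : seq V) : cycle adj s ->
  forall i, (i < size s)%N -> adj (nth x0 s i) (nth x0 s (nx (size s) i)).
Proof.
rewrite (cycle_path x0) => /(pathP x0) h i hi; rewrite /nx.
case: ifP => hi1.
  by have := h i.+1 hi1.
have ei : i = (size s).-1 by lia.
have := h 0%N (leq_ltn_trans (leq0n _) hi) => /=.
by rewrite ei; case: (s) hi => //= a l _; rewrite nth_last.
Qed.

Lemma sum_nx (f : nat -> nat) L : (0 < L)%N ->
  (\sum_(i < L) f (nx L i) = \sum_(i < L) f i)%N.
Proof.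
case: L => // L _.
rewrite big_ord_recr big_ord_recl /= /nx ltnn addnC; congr (_ + _)%N.
by apply: eq_bigr => i _ /=; rewrite ltnS ltn_ord.
Qed.

Section Converse.
Import GRing.Theory.
Local Open Scope ring_scope.
Variables (vinf : V) (C : {vspace {ffun edge adj -> ('F_2)^o}}) (r t : nat).
Hypothesis HC : binary_code vinf C.
Hypothesis rec : seq_recoverable C r t.

Lemma girth_of_rec : girth_at_least adj t.+1.
Proof.
move=> s us s3 cs; rewrite leqNgt; apply/negP => hst.
set L := size s in s3 hst.
have L0 : (0 < L)%N by lia.
have ad := cyc_adj vinf cs.
pose S (i : nat) := [set nth vinf s i; nth vinf s (nx L i)].
have Sedge i : (i < L)%N -> is_edge adj (S i).
  move=> hi; apply/existsP; exists (nth vinf s i); apply/existsP.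
  by exists (nth vinf s (nx L i)); rewrite ad // eqxx.
have nxL i : (i < L)%N -> (nx L i < L)%N by rewrite /nx; case: ifP.
have Sinj i j : (i < L)%N -> (j < L)%N -> S i = S j -> i = j.
  move=> hi hj /set2_eq [[e1 e2]|[e1 e2]].
    by move/eqP: e1; rewrite nth_uniq // => /eqP.
  move/eqP: e1; rewrite nth_uniq ?nxL // => /eqP e1.
  move/eqP: e2; rewrite nth_uniq ?nxL // => /eqP e2.
  by move: e1 e2; rewrite /nx; case: ifP; case: ifP; lia.
pose E := [set e : edge adj | [exists i : 'I_L, val e == S i]].
have valE : [set val e | e in E] = [set S i | i : 'I_L].
  apply/setP => X; apply/imsetP/imsetP => [[e]|[i _ ->]].
    by rewrite inE => /existsP [i /eqP ei] ->; exists i.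
  exists (Sub (S i) (Sedge i (ltn_ord i))) => //.
  by rewrite inE; apply/existsP; exists i.
have cardE : (#|E| <= L)%N.
  rewrite -(card_imset _ val_inj) valE.
  by apply: leq_trans (leq_imset_card _ _) _; rewrite card_ord.
have E0 : E != set0.
  apply/set0Pn; exists (Sub (S 0%N) (Sedge 0%N L0)).
  by rewrite inE; apply/existsP; exists (Ordinal L0).
pose c : {ffun edge adj -> ('F_2)^o} := [ffun e => ((e \in E) : nat)%:R].
have cC : c \in C.
  rewrite HC; apply/forallP => v; apply/implyP => _.
  rewrite (eq_bigr (fun e => if e \in E then ((v \in val e):nat)%:R else 0)); last first.
    by move=> e _; rewrite ffunE; case: (e \in E); rewrite /= ?mulr1 ?mulr0.
  rewrite -big_mkcond /=.
  rewrite -(big_imset (fun X : {set V} => ((v \in X):nat)%:R)) /=; last first.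
    by move=> ? ? _ _; exact: val_inj.
  rewrite valE big_imset /=; last first.
    by move=> i j _ _ /(Sinj _ _ (ltn_ord i) (ltn_ord j)) /val_inj.
  rewrite -natr_sum.
  have -> : (\sum_(i in 'I_L) (v \in S i) =
            (\sum_(i < L) (v == nth vinf s i)) * 2)%N.
    rewrite (eq_bigr (fun i : 'I_L => (v == nth vinf s i) + (v == nth vinf s (nx L i))))%N.
      by rewrite big_split /= (sum_nx (fun k => (v == nth vinf s k) : nat)) // addnn -muln2.
    move=> i _; rewrite !inE.
    have ne : nth vinf s i != nth vinf s (nx L i).
      by apply/eqP => h; have := ad i (ltn_ord i); rewrite h adjI.
    by case: eqP => [->|] /=; rewrite ?(negbTE ne) ?eqxx.
  rewrite natrM.
  have -> : (2%:R : 'F_2) = 0 by apply: val_inj.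
  by rewrite mulr0.
have := rec (E := E); rewrite card_gt0 E0 (leq_trans cardE) // => /(_ isT).
case=> l [ul sl rl].
case: l ul sl rl => [|x l] ul sl rl.
  by move: E0; rewrite -sl; case/set0Pn => y; rewrite inE.
have [R [a [_ dR hR]]] := rl x (mem_head _ _).
move: dR; rewrite /= eqxx drop0 => dR.
have cx : c x = 1 by rewrite ffunE -sl inE mem_head.
have := hR c cC; rewrite cx big1.
  by move/eqP; rewrite oner_eq0.
move=> i iR; rewrite ffunE.
have iE : (i \in x :: l) = false by exact: (@disjFr _ R (x :: l) i dR iR).
have -> : (i \in E) = false by rewrite -sl inE iE.
by rewrite mulr0.
Qed.

End Converse.
End Graph.

Theorem mainTheorem5 (r t a0 : nat) (V : finType) (adj : rel V) (vinf : V) :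
  (2 <= r)%N -> (2 <= t)%N -> (0 < a0)%N ->
  symmetric adj -> irreflexive adj ->
  staircase adj vinf r t a0 ->
  (forall C : {vspace {ffun edge adj -> ('F_2)^o}},
     binary_code vinf C ->
     (seq_code C #|{: edge adj}| (\dim C) r t <-> girth_at_least adj t.+1)) /\
  (girth_at_least adj t.+1 ->
   forall (F : finFieldType) (C : {vspace {ffun edge adj -> F^o}}),
     associated_code vinf C ->
     seq_code C #|{: edge adj}| (\dim C) r t).
Proof.
move=> r2 t2 a0p adjS adjI [lvl hst].
have deg : forall v, v != vinf -> (#|[set e : edge adj | v \in val e]| <= r.+1)%N.
  move=> v hv; apply: (edeg_le adjS).
  exact: (nbr_card adjS t2 hst hv).
split.
  move=> C HC; split.
    by case=> _ _ hrec; apply: (girth_of_rec adjI HC hrec).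
  move=> g; split => //.
  apply: (recoverable adjS adjI _ HC deg g).
  by move=> v e _; case: (v \in val e).
move=> g F C [H [Hnz HC]]; split => //.
exact: (recoverable adjS adjI Hnz HC deg g).
Qed.
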